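(* Let $n\ge2$ and $1\le j\le n$, $r>0$. Then $$\sup_{S\in W_r^1}|\theta_{j,n}-\theta_j|\le2\pi\sqrt r\,j/n,$$ where $\theta_{j,n}=\frac1n\sum_{l=1}^nS(l/n)\phi_j(l/n)$ and $\theta_j=\int_0^1S(t)\phi_j(t)dt$.
   Context: $\phi_1\equiv1$, $\phi_j(x)=\sqrt2\,\mathrm{Tr}_j(2\pi[j/2]x)$ for $j\ge2$, where $\mathrm{Tr}_j=\cos$ for even $j$, $\sin$ for odd $j$, $[\cdot]$ integer part. $W_r^1$: set of 1-periodic continuously differentiable $f:\mathbb R\to\mathbb R$ with $\|f\|^2+\|f'\|^2\le r$, $\|f\|^2=\int_0^1f^2$. *)

(* Defs.v *)
From Stdlib Require Import Reals.
From Coquelicot Require Import Coquelicot.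
Open Scope R_scope.

(* Trigonometric basis: phi_1 = 1, phi_j(x) = sqrt 2 * Tr_j(2 pi [j/2] x) for j >= 2,
   Tr_j = cos for even j, sin for odd j.  (phi_0 is never used; it is set to 1.) *)
Definition phi (j : nat) (x : R) : R :=
  match j with
  | O | 1%nat => 1
  | _ => sqrt 2 *
         (if Nat.even j then cos (2 * PI * INR (Nat.div j 2) * x)
          else sin (2 * PI * INR (Nat.div j 2) * x))
  end.

Definition W1 (r : R) (f : R -> R) : Prop :=
  (forall x, f (x + 1) = f x) /\
  (forall x, ex_derive f x) /\
  (forall x, continuous (Derive f) x) /\
  RInt (fun t => (f t)^2) 0 1 + RInt (fun t => (Derive f t)^2) 0 1 <= r.

Definition theta_n (S : R -> R) (j n : nat) : R :=
  / INR n * sum_f_R0 (fun k => S (INR (k + 1) / INR n) * phi j (INR (k + 1) / INR n)) (n - 1).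

Definition theta (S : R -> R) (j : nat) : R :=
  RInt (fun t => S t * phi j t) 0 1.

(* Main.v *)
Require Import Defs.
From Stdlib Require Import Reals Lra Lia.
From Coquelicot Require Import Coquelicot.
Open Scope R_scope.

Definition phid (j : nat) (x : R) : R :=
  match j with
  | O | 1%nat => 0
  | _ => sqrt 2 *
         (if Nat.even j then - (2 * PI * INR (Nat.div j 2)) * sin (2 * PI * INR (Nat.div j 2) * x)
          else (2 * PI * INR (Nat.div j 2)) * cos (2 * PI * INR (Nat.div j 2) * x))
  end.

Lemma phi_der j t : is_derive (phi j) t (phid j t).
Proof.
  destruct j as [|[|j]]; unfold phi, phid.
  - apply (is_derive_const (K:=R_AbsRing) (V:=R_NormedModule)).
  - apply (is_derive_const (K:=R_AbsRing) (V:=R_NormedModule)).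
  - destruct (Nat.even (S (S j))); generalize (Nat.div (S (S j)) 2); intro m; auto_derive; auto; ring.
Qed.

Lemma phid_cont j t : continuous (phid j) t.
Proof.
  destruct j as [|[|j]]; unfold phid.
  - apply continuous_const.
  - apply continuous_const.
  - apply (ex_derive_continuous (K:=R_AbsRing) (V:=R_NormedModule)).
    destruct (Nat.even (S (S j))); generalize (Nat.div (S (S j)) 2); intro m; auto_derive; auto.
Qed.

Lemma sqrt2_bounds : 1 <= sqrt 2 <= 3/2.
Proof.
  assert (H := sqrt_sqrt 2 ltac:(lra)). assert (H0 := sqrt_pos 2). nra.
Qed.

Lemma phi_bound j t : (1 <= j)%nat -> Rabs (phi j t) <= sqrt 2.
Proof.
  intros Hj. destruct j as [|[|j]]; try lia; unfold phi.
  - rewrite Rabs_R1. pose proof sqrt2_bounds; lra.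
  - pose proof (sqrt_pos 2). rewrite Rabs_mult, (Rabs_pos_eq (sqrt 2)) by auto.
    rewrite <- (Rmult_1_r (sqrt 2)) at 2. apply Rmult_le_compat_l; auto.
    destruct (Nat.even _); [apply Rabs_le; apply COS_bound | apply Rabs_le; apply SIN_bound].
Qed.

Lemma phid_bound j t : Rabs (phid j t) <= sqrt 2 * (PI * INR j).
Proof.
  pose proof (sqrt_pos 2). pose proof PI_RGT_0.
  assert (Hw : 0 <= 2 * PI * INR (Nat.div j 2) <= PI * INR j).
  { assert (H1 : (2 * Nat.div j 2 <= j)%nat) by (apply Nat.Div0.mul_div_le).
    apply le_INR in H1. rewrite mult_INR in H1. replace (INR 2) with 2 in H1 by (simpl; ring). pose proof (pos_INR (Nat.div j 2)). nra. }
  assert (0 <= PI * INR j) by lra.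
  destruct j as [|[|j]]; unfold phid.
  - rewrite Rabs_R0. nra.
  - rewrite Rabs_R0. nra.
  - rewrite Rabs_mult, (Rabs_pos_eq (sqrt 2)) by auto.
    apply Rmult_le_compat_l; auto.
    destruct (Nat.even _); rewrite Rabs_mult.
    + rewrite Rabs_Ropp, Rabs_pos_eq by lra.
      pose proof (Rabs_le _ 1 (SIN_bound (2 * PI * INR (Nat.div (S (S j)) 2) * t))).
      pose proof (Rabs_pos (sin (2 * PI * INR (Nat.div (S (S j)) 2) * t))). nra.
    + rewrite Rabs_pos_eq by lra.
      pose proof (Rabs_le _ 1 (COS_bound (2 * PI * INR (Nat.div (S (S j)) 2) * t))).
      pose proof (Rabs_pos (cos (2 * PI * INR (Nat.div (S (S j)) 2) * t))). nra.
Qed.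
Lemma cont_of_der (g gp : R -> R) : (forall t, is_derive g t (gp t)) -> forall t, continuous g t.
Proof. intros H t. apply (ex_derive_continuous (K:=R_AbsRing) (V:=R_NormedModule)). exists (gp t). apply H. Qed.

Lemma exR (f : R -> R) a b : (forall z, continuous f z) -> ex_RInt f a b.
Proof. intros H. apply (ex_RInt_continuous (V:=R_CompleteNormedModule)). intros; apply H. Qed.

Lemma ftc_abs (g gp : R -> R) : (forall t, is_derive g t (gp t)) -> (forall t, continuous gp t) ->
  forall a b, a <= b -> Rabs (g b - g a) <= RInt (fun t => Rabs (gp t)) a b.
Proof.
  intros Hd Hc a b Hab.
  assert (E : RInt gp a b = g b - g a).
  { apply is_RInt_unique. apply (is_RInt_derive g gp); intros; auto. }
  rewrite <- E. apply abs_RInt_le; auto. apply exR; auto.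
Qed.

Lemma exabs (gp : R -> R) : (forall t, continuous gp t) -> forall a b, ex_RInt (fun t => Rabs (gp t)) a b.
Proof.
  intros Hc a b. apply exR; intros.
  apply (continuous_comp gp Rabs); auto. apply continuous_Rabs.
Qed.

Lemma int_err (g gp : R -> R) : (forall t, is_derive g t (gp t)) -> (forall t, continuous gp t) ->
  forall a b, a <= b -> Rabs ((b-a) * g b - RInt g a b) <= (b-a) * RInt (fun t => Rabs (gp t)) a b.
Proof.
  intros Hd Hc a b Hab.
  assert (Cg := cont_of_der g gp Hd).
  assert (Eg : ex_RInt g a b) by (apply exR; auto).
  assert (E1 : (b-a) * g b = RInt (fun _ => g b) a b) by (rewrite RInt_const; reflexivity).
  rewrite E1.
  assert (E2 : RInt (fun _ => g b) a b - RInt g a b = RInt (fun t => g b - g t) a b).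
  { symmetry. apply (RInt_minus (fun _ => g b) g). apply ex_RInt_const. auto. }
  rewrite E2.
  apply abs_RInt_le_const; auto.
  - apply exR; intros. apply (continuous_minus (fun _ => g b) g).
    apply continuous_const. auto.
  - intros t Ht.
    apply Rle_trans with (RInt (fun t => Rabs (gp t)) t b).
    + apply ftc_abs; auto; lra.
    + rewrite <- (RInt_Chasles (fun t => Rabs (gp t)) a t b) by (apply exabs; auto).
      assert (0 <= RInt (fun t => Rabs (gp t)) a t).
      { apply RInt_ge_0. lra. apply exabs; auto. intros; apply Rabs_pos. }
      unfold plus; simpl; lra.
Qed.

Lemma sum_err (g gp : R -> R) : (forall t, is_derive g t (gp t)) -> (forall t, continuous gp t) ->
  forall h, 0 < h -> forall N,
  Rabs (sum_f_R0 (fun k => g (INR (k+1) * h) * h) N - RInt g 0 (INR (N+1) * h))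
   <= h * RInt (fun t => Rabs (gp t)) 0 (INR (N+1) * h).
Proof.
  intros Hd Hc h Hh.
  assert (Cg := cont_of_der g gp Hd).
  assert (Eg : forall a b, ex_RInt g a b) by (intros; apply exR; auto).
  induction N.
  - simpl sum_f_R0. replace (INR (0+1)) with 1 by (simpl; ring).
    assert (H := int_err g gp Hd Hc 0 (1*h) ltac:(lra)).
    replace (1*h - 0) with h in H by ring.
    rewrite Rmult_comm. exact H.
  - rewrite tech5.
    assert (C1 : RInt g 0 (INR (S N + 1) * h) = RInt g 0 (INR (N+1) * h) + RInt g (INR (N+1) * h) (INR (S N + 1) * h)).
    { symmetry. apply (RInt_Chasles g); auto. }
    assert (C2 : RInt (fun t => Rabs (gp t)) 0 (INR (S N + 1) * h) = RInt (fun t => Rabs (gp t)) 0 (INR (N+1) * h) + RInt (fun t => Rabs (gp t)) (INR (N+1) * h) (INR (S N + 1) * h)).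
    { symmetry. apply (RInt_Chasles (fun t => Rabs (gp t))); apply exabs; auto. }
    rewrite C1, C2.
    assert (Hs : INR (S N + 1) * h - INR (N+1) * h = h).
    { rewrite !plus_INR, S_INR. simpl. ring. }
    assert (H := int_err g gp Hd Hc (INR (N+1) * h) (INR (S N + 1) * h) ltac:(lra)).
    rewrite Hs in H.
    match goal with |- Rabs (?A + ?B - (?C + ?D)) <= _ => 
      replace (A + B - (C + D)) with ((A - C) + (h * g (INR (S N+1) * h) - D)) by ring end.
    eapply Rle_trans. apply Rabs_triang. rewrite Rmult_plus_distr_l. apply Rplus_le_compat; auto.
Qed.

Lemma pointwise (c L x y : R) : 0 < L -> 0 <= c ->
  Rabs x + c * Rabs y <= (x^2 + y^2) / (2*L) + L * (1 + c^2) / 2.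
Proof.
  intros HL Hc.
  assert (E : (x^2 + y^2) / (2*L) + L * (1 + c^2) / 2 - (Rabs x + c * Rabs y)
     = ((Rabs x - L)^2 + (Rabs y - L*c)^2) / (2*L)).
  { rewrite <- (pow2_abs x), <- (pow2_abs y). field. lra. }
  assert (0 <= ((Rabs x - L)^2 + (Rabs y - L*c)^2) / (2*L)).
  { apply Rdiv_le_0_compat; [apply Rplus_le_le_0_compat; apply pow2_ge_0 | lra]. }
  lra.
Qed.

Theorem lemmaA3 (n j : nat) (r : R) :
  (2 <= n)%nat -> (1 <= j <= n)%nat -> 0 < r ->
  forall S : R -> R, W1 r S ->
    Rabs (theta_n S j n - theta S j) <= 2 * PI * sqrt r * INR j / INR n.
Proof.
  intros Hn Hj Hr S [Hper [HdS [HcS Hint]]].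
  set (g := fun t => S t * phi j t).
  set (gp := fun t => Derive S t * phi j t + S t * phid j t).
  assert (Hd : forall t, is_derive g t (gp t)).
  { intros t. unfold g, gp. apply (is_derive_mult S (phi j)).
    - apply Derive_correct. auto.
    - apply phi_der.
    - intros; apply Rmult_comm. }
  assert (CS : forall t, continuous S t).
  { intros t. apply (ex_derive_continuous (K:=R_AbsRing) (V:=R_NormedModule)). auto. }
  assert (Cphi : forall t, continuous (phi j) t).
  { intros t. apply (ex_derive_continuous (K:=R_AbsRing) (V:=R_NormedModule)). exists (phid j t). apply phi_der. }
  assert (Hc : forall t, continuous gp t).
  { intros t. unfold gp. apply (continuous_plus (fun t => Derive S t * phi j t) (fun t => S t * phid j t)).
    - apply (continuous_mult (Derive S) (phi j)); auto.
    - apply (continuous_mult S (phid j)); auto. apply phid_cont. }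
  assert (HnR : 0 < INR n) by (apply lt_0_INR; lia).
  set (h := / INR n).
  assert (Hh : 0 < h) by (apply Rinv_0_lt_compat; auto).
  assert (Main := sum_err g gp Hd Hc h Hh (n-1)).
  replace (INR (n - 1 + 1) * h) with 1 in Main
    by (replace (n - 1 + 1)%nat with n by lia; unfold h; field; lra).
  assert (E1 : theta_n S j n = sum_f_R0 (fun k => g (INR (k+1) * h) * h) (n-1)).
  { unfold theta_n. rewrite scal_sum. reflexivity. }
  assert (E2 : theta S j = RInt g 0 1) by reflexivity.
  rewrite E1, E2.
  eapply Rle_trans; [exact Main|].
  set (c := PI * INR j).
  assert (Hjr : 1 <= INR j) by (apply (le_INR 1); lia).
  pose proof PI_RGT_0. pose proof PI2_1.
  assert (Hc1 : 2 <= c) by (unfold c; nra).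
  set (sr := sqrt r).
  assert (Hsr : 0 < sr) by (apply sqrt_lt_R0; auto).
  assert (Hrsr : r = sr * sr) by (unfold sr; rewrite sqrt_sqrt; lra).
  set (L := sr / c).
  assert (HL : 0 < L) by (unfold L; apply Rdiv_lt_0_compat; lra).
  pose proof sqrt2_bounds as [Hs1 Hs2].
  set (K := sqrt 2 / (2*L)).
  set (M := sqrt 2 * (L * (1 + c^2) / 2)).
  assert (PB : forall t, Rabs (gp t) <= K * ((S t)^2 + (Derive S t)^2) + M).
  { intros t. unfold gp.
    pose proof (phi_bound j t ltac:(lia)) as P1. pose proof (phid_bound j t) as P2. fold c in P2.
    pose proof (pointwise c L (Derive S t) (S t) HL ltac:(lra)) as P3.
    apply Rle_trans with (sqrt 2 * (Rabs (Derive S t) + c * Rabs (S t))).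
    - eapply Rle_trans; [apply Rabs_triang|]. rewrite !Rabs_mult.
      pose proof (Rabs_pos (Derive S t)). pose proof (Rabs_pos (S t)).
      pose proof (Rabs_pos (phi j t)). pose proof (Rabs_pos (phid j t)). nra.
    - unfold K, M. replace (sqrt 2 / (2 * L) * (S t ^ 2 + Derive S t ^ 2)) with
        (sqrt 2 * ((Derive S t ^ 2 + S t ^ 2) / (2 * L))) by (field; lra).
      rewrite <- Rmult_plus_distr_l. apply Rmult_le_compat_l; lra. }
  assert (ES1 : ex_RInt (fun t => (S t)^2) 0 1).
  { apply exR. intros t. apply (continuous_mult S (fun t => S t ^ 1)); auto.
    apply (continuous_mult S (fun _ => 1)); auto. apply continuous_const. }
  assert (ES2 : ex_RInt (fun t => (Derive S t)^2) 0 1).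
  { apply exR. intros t. apply (continuous_mult (Derive S) (fun t => Derive S t ^ 1)); auto.
    apply (continuous_mult (Derive S) (fun _ => 1)); auto. apply continuous_const. }
  assert (EI : is_RInt (fun t => K * ((S t)^2 + (Derive S t)^2) + M) 0 1
     (K * (RInt (fun t => (S t)^2) 0 1 + RInt (fun t => (Derive S t)^2) 0 1) + M)).
  { apply (is_RInt_plus (V:=R_NormedModule) (fun t => K * ((S t)^2 + (Derive S t)^2)) (fun _ => M)).
    - apply (is_RInt_scal (V:=R_NormedModule) (fun t => (S t)^2 + (Derive S t)^2)).
      apply (is_RInt_plus (V:=R_NormedModule)); apply (RInt_correct (V:=R_CompleteNormedModule)); auto.
    - pose proof (is_RInt_const (V:=R_NormedModule) 0 1 M) as HM.
      match type of HM with is_RInt _ _ _ ?v => replace v with M in HM by (unfold scal; simpl; unfold mult; simpl; ring) end.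
      exact HM. }
  assert (IB : RInt (fun t => Rabs (gp t)) 0 1 <= K * r + M).
  { apply Rle_trans with (RInt (fun t => K * ((S t)^2 + (Derive S t)^2) + M) 0 1).
    - apply RInt_le. lra. apply exabs; auto. eexists; exact EI. intros; apply PB.
    - rewrite (is_RInt_unique _ _ _ _ EI).
      assert (0 < K) by (unfold K; apply Rdiv_lt_0_compat; lra). nra. }
  assert (Fin : K * r + M <= 2 * c * sr).
  { unfold K, M, L. rewrite Hrsr.
    replace (sqrt 2 / (2 * (sr / c)) * (sr * sr) + sqrt 2 * (sr / c * (1 + c ^ 2) / 2))
      with (sr * (sqrt 2 * (2 * c^2 + 1)) / (2 * c)) by (field; lra).
    apply Rle_trans with (sr * (4 * c^2) / (2 * c)).
    - apply Rmult_le_compat_r. left; apply Rinv_0_lt_compat; lra.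
      apply Rmult_le_compat_l; nra.
    - right; field; lra. }
  apply Rle_trans with (h * (2 * c * sr)). apply Rmult_le_compat_l; lra.
  right. unfold h, c, sr, Rdiv. ring.
Qed.
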